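(* Let $\Gamma$ be a $3$-saturated drawing. Then \[ \sum_{a\ge 6} a\,|\mathcal{C}_a| \;\ge\; \tau(B_4,L)+\tau(B_5,L)+\tau(A_3,L)+\tau(A_5,L)+5\,N(U_6). \]
   Context: Drawings are on the sphere: vertices are distinct points, edges (of a graph possibly with parallel edges, no loops) are Jordan arcs; any two edges share finitely many points, each a common endpoint or a proper crossing; no three edges cross at one point; no edge crosses itself; adjacent edges do not cross. A drawing is $3$-plane if every edge is crossed at most three times. A lens is a region bounded by exactly two parts of edges; a drawing is non-homotopic if every lens contains a crossing or vertex in its interior. An edge with $i$ crossings is split into $i+1$ edge-segments; an edge-segment is inner if both its endpoints are crossings and outer otherwise. The planarization replaces each crossing by a degree-$4$ vertex; the drawing is connected if its planarization is connected. Cells are the components of the sphere minus all vertices and edges; the boundary $\partial c$ of a cell is a cyclic sequence alternating between edge-segments and vertices/crossings. The size $\|c\|$ of a cell is the number of vertex incidences plus the number of edge-segment incidences along $\partial c$ (crossings not counted); $\mathcal{C}_a$ is the set of cells of size $a$. A drawing is filled if for every cell $c$ and distinct vertices $u\ne v$ on $\partial c$ there is an uncrossed edge $uv$ on $\partial c$. A drawing is $3$-saturated if it is $3$-plane, non-homotopic, connected, filled, and has at least three vertices. Cell types: $A_3$: three crossings and three inner edge-segments, no vertex. $A_4$: four crossings and four inner edge-segments. $B_4$: boundary $v$, outer segment, crossing, inner segment, crossing, outer segment. $B_5$: boundary $v$, outer segment, crossing, inner segment, crossing, inner segment, crossing, outer segment. $A_5$: five crossings and five inner segments. $U_6$: boundary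 $u$, uncrossed edge $uv$, $v$, outer segment, crossing, inner segment, crossing, outer segment (two vertices $u,v$), size $6$. $L$: any cell of size at least $6$. $N(T)$ is the number of cells of type $T$. Trails: a trail is a sequence $(c_1,\dots,c_\ell)$, $\ell\ge 2$, of cells such that (1) neither $c_1$ nor $c_\ell$ is of type $A_4$; (2) consecutive cells $c_i,c_{i+1}$ share an inner edge-segment; (3) each of $c_2,\dots,c_{\ell-1}$ is an $A_4$-cell whose two edge-segments shared with its neighbours are opposite on its boundary. A trail and its reversal are the same trail. $\tau(T,T')=\tau(T',T)$ is the number of trails whose end cells are of types $T$ and $T'$. *)

(* Defs.v *)
(* A drawing on the sphere is encoded, up to homeomorphism of
   the sphere, by its planarization viewed as a combinatorial map (rotation
   system) on a finite set of darts. *)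
From mathcomp Require Import all_boot.

Set Implicit Arguments.
Unset Strict Implicit.
Unset Printing Implicit Defensive.

(* dart    : half-edge-segments of the planarization (each edge-segment of the
             drawing gives two darts, one at each end);
   alpha   : the other dart of the same edge-segment;
   sigma   : the (counterclockwise) rotation of darts around their node;
   isv d   : the node (vertex of the planarization) at which d starts is a
             vertex of the drawing (otherwise it is a crossing).  *)
Record drawing := Drawing {
  dart  : finType;
  alpha : dart -> dart;
  sigma : dart -> dart;
  isv   : pred dart }.

Section Drawing.
Variable G : drawing.
Local Notation D := (dart G).
Local Notation al := (@alpha G).
Local Notation sg := (@sigma G).
Local Notation v := (@isv G).

(* face permutation: the boundary walk of a cell traverses the segment of d,
   arrives at the node of (al d) and continues with phi d. *)
Definition phi (d : D) : D := sg (al d).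
(* continuation of an edge straight through the crossing at the far end of d *)
Definition nx (d : D) : D := sg (sg (al d)).

Definition same_node : rel D := fconnect sg.
Definition same_face : rel D := fconnect phi.
Definition edge_link : rel D :=
  fun d e => (e == al d) || (~~ v d && (e == sg (sg d))).
Definition same_edge : rel D := connect edge_link.
Definition map_link : rel D := fun d e => (e == al d) || (e == sg d).

Definition n_nodes : nat := #|[set froot sg d | d : D]|.
Definition faces : {set D} := [set froot phi d | d : D].
Definition n_faces : nat := #|faces|.

Definition is_drawing : Prop :=
  (forall d, al (al d) = d) /\ (forall d, al d != d) /\ injective sg /\
  (forall d, v (sg d) = v d) /\
  (* connected planarization, embedded in the sphere (Euler formula) *)
  (forall d e, connect map_link d e) /\
  2 * (n_nodes + n_faces) = #|D| + 4 /\
  (* crossings are proper crossings of exactly two edges *)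
  (forall d, ~~ v d -> order sg d = 4) /\
  (* every edge is an arc between two vertices (no closed curves) *)
  (forall d, exists k, v (al (iter k nx d))) /\
  (* no edge crosses itself *)
  (forall d, ~~ v d -> ~~ same_edge d (sg d)) /\
  (* adjacent edges do not cross *)
  (forall d u w, ~~ v d -> v u -> v w -> same_edge d u ->
       same_edge (sg d) w -> ~~ same_node u w) /\
  (* no loops *)
  (forall u w, v u -> v w -> same_edge u w -> u != w -> ~~ same_node u w).

(* every edge is crossed at most three times *)
Definition three_plane : Prop :=
  forall d, v d -> exists2 k, k <= 3 & v (al (iter k nx d)).

(* Lenses.  A part of an edge is a straight path x :: s of darts, going from
   the node of x to the node of (al (last x s)) through crossings. *)
Definition straight_step : rel D := fun x y => ~~ v (al x) && (y == nx x).
Definition spath (x : D) (s : seq D) : bool := path straight_step x s.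
Definition pnodes (x : D) (s : seq D) : seq D := x :: map al (x :: s).
Definition psegs (x : D) (s : seq D) : seq D := (x :: s) ++ map al (x :: s).

(* two edge-parts x::s and y::t with common distinct end nodes and no other
   common node bound a closed Jordan curve *)
Definition lens_curve (x : D) (s : seq D) (y : D) (t : seq D) : bool :=
  [&& spath x s, spath y t, x != y, same_node x y,
      same_node (al (last x s)) (al (last y t)),
      ~~ same_node x (al (last x s)) &
      all (fun u => all (fun w => same_node u w ==>
               (same_node u x || same_node u (al (last x s))))
               (pnodes y t)) (pnodes x s)].

(* moving inside one of the two regions bounded by the curve *)
Definition side_link (cut : seq D) : rel D :=
  fun d e => (e == phi d) || ((e == al d) && (d \notin cut)).

Definition non_homotopic : Prop :=
  forall x s y t, lens_curve x s y t ->
    let cut := psegs x s ++ psegs y t in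
    let cn := pnodes x s ++ pnodes y t in
    forall w, w \in [:: x; al x] ->
      exists e, connect (side_link cut) w e && all (fun u => ~~ same_node e u) cn.

Definition connected_drawing : Prop := forall d e, connect map_link d e.

Definition filled : Prop :=
  forall d1 d2, same_face d1 d2 -> v d1 -> v d2 -> ~~ same_node d1 d2 ->
    exists e, [/\ same_face d1 e, v e, v (al e) &
      (same_node e d1 && same_node (al e) d2) ||
      (same_node e d2 && same_node (al e) d1)].

Definition three_vertices : Prop :=
  exists u w z, [/\ v u, v w, v z &
     [&& ~~ same_node u w, ~~ same_node u z & ~~ same_node w z]].

Definition three_saturated : Prop :=
  is_drawing /\ three_plane /\ non_homotopic /\ connected_drawing /\
  filled /\ three_vertices.

(* Cells: the cell of dart d is its phi-orbit. *)
Definition flen (d : D) : nat := order phi d.            (* edge-segment incidences *)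
Definition fnv (d : D) : nat := count v (orbit phi d).  (* vertex incidences *)
Definition fsize (d : D) : nat := flen d + fnv d.

Definition isA3 (d : D) : bool := (flen d == 3) && (fnv d == 0).
Definition isA4 (d : D) : bool := (flen d == 4) && (fnv d == 0).
Definition isA5 (d : D) : bool := (flen d == 5) && (fnv d == 0).
Definition isB4 (d : D) : bool := (flen d == 3) && (fnv d == 1).
Definition isB5 (d : D) : bool := (flen d == 4) && (fnv d == 1).
Definition isU6 (d : D) : bool :=
  [&& flen d == 4, fnv d == 2 & has (fun e => v e && v (phi e)) (orbit phi d)].
Definition isL (d : D) : bool := 6 <= fsize d.

Definition inner (d : D) : bool := ~~ v d && ~~ v (al d).

(* Trails: leaving the cell of d through the segment of d, entering the cell
   of (al d); in an A4-cell the walk exits through the opposite segment. *)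
Definition tr (d : D) : D := iter 2 phi (al d).

(* the trail starting through the inner segment d ends in a cell satisfying P
   (the bound k < #|D| is harmless) *)
Definition trail_ends (P : pred D) (d : D) : bool :=
  [exists k : 'I_#|D|,
     [forall j : 'I_#|D|, (j < k) ==> isA4 (al (iter j tr d))] &&
     P (al (iter k tr d))].

(* tau(T, L) for a type T different from A4 and disjoint from L *)
Definition tauL (T : pred D) : nat :=
  #|[set d : D | [&& T d, inner d & trail_ends isL d]]|.

Definition N_U6 : nat := #|[set c in faces | isU6 c]|.

Definition large_sum : nat := \sum_(c in faces | 6 <= fsize c) fsize c.

End Drawing.

(* Main.v *)
Require Import Defs.
From mathcomp Require Import all_boot zify.
Set Implicit Arguments.
Unset Strict Implicit.
Unset Printing Implicit Defensive.

Lemma orbit_inv (T : finType) (f : T -> T) (finj : injective f) x y :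
  fconnect f x y -> exists i, orbit f y = rot i (orbit f x).
Proof.
rewrite fconnect_orbit => yx.
have [i ->] := orbit_rot_cycle (cycle_orbit finj x) (orbit_uniq f x) yx.
by exists i.
Qed.

Lemma phi_inj (G : drawing) : is_drawing G -> injective (@phi G).
Proof.
move=> [alK [_ [sgI _]]] x y; rewrite /phi => /sgI.
by move/(congr1 (@alpha G)); rewrite !alK.
Qed.

Lemma fsame (G : drawing) (H : is_drawing G) (x y : dart G) :
  fconnect (@phi G) x y -> flen x = flen y /\ fnv x = fnv y.
Proof.
move=> /(orbit_inv (phi_inj H)) [i E].
rewrite /flen /fnv -!size_orbit E size_rot; split => //.
have P : perm_eq (rot i (orbit (@phi G) x)) (orbit (@phi G) x).
  by rewrite perm_rot perm_refl.
by rewrite (permP P).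
Qed.

Section P2.
Variable G : drawing.
Lemma v_phi (H : is_drawing G) (x : dart G) : isv (phi x) = isv (alpha x).
Proof. by case: H => [_ [_ [_ [vs _]]]]; rewrite /phi vs. Qed.

Lemma innerE (H : is_drawing G) (x : dart G) : inner x = ~~ isv x && ~~ isv (phi x).
Proof. by rewrite /inner v_phi. Qed.

Lemma inner_al (H : is_drawing G) (x : dart G) : inner (alpha x) = inner x.
Proof. by case: H => [alK _]; rewrite /inner alK andbC. Qed.

Lemma fnv0 (H : is_drawing G) (x y : dart G) : fnv x = 0 -> fconnect (@phi G) x y -> ~~ isv y.
Proof.
rewrite /fnv fconnect_orbit => /eqP; rewrite -leqn0 leqNgt -has_count => /hasPn; apply.
Qed.

Lemma iso_face (H : is_drawing G) (P : pred (dart G)) :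
  (forall x, P x = [&& flen x == 4 & fnv x == 0]) ->
  forall x y, fconnect (@phi G) x y -> P x -> P y.
Proof. by move=> PE x y /(fsame H) [E1 E2]; rewrite !PE E1 E2. Qed.

Lemma tr_A4 (H : is_drawing G) (x : dart G) :
  isA4 (alpha x) -> isA4 (tr x) /\ inner (tr x).
Proof.
move=> A.
have C : fconnect (@phi G) (alpha x) (tr x) by apply: (fconnect_iter _ 2).
have [E1 E2] := fsame H C.
move: (A); rewrite /isA4 E1 E2 => ->; split => //.
move: A; rewrite /isA4 => /andP [_ /eqP A0].
rewrite innerE //; apply/andP; split; apply: (fnv0 H A0) => //.
by apply: connect_trans C (fconnect1 _ _).
Qed.

Lemma tr_inj (H : is_drawing G) : injective (@tr G).
Proof.
have pI := phi_inj H; case: H => [alK _] x y /= /pI /pI.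
by move/(congr1 (@alpha G)); rewrite !alK.
Qed.

Lemma iter_inj (T : Type) (f : T -> T) : injective f -> forall n, injective (iter n f).
Proof. by move=> fI; elim=> [//|n IH] x y /= /fI /IH. Qed.

Lemma key (H : is_drawing G) (d1 d2 : dart G) k1 k2 :
  ~~ isA4 d1 -> (forall j, j < k2 -> isA4 (alpha (iter j (@tr G) d2))) ->
  k1 <= k2 -> iter k1 (@tr G) d1 = iter k2 (@tr G) d2 -> d1 = d2.
Proof.
move=> nA all le E.
have E' : d1 = iter (k2 - k1) (@tr G) d2.
  move: E; rewrite -{1}(subnKC le) iterD.
  exact: (iter_inj (tr_inj H)).
move: E'; case Ek : (k2 - k1) => [//|m] E'.
have /tr_A4 [] // : isA4 (alpha (iter m (@tr G) d2)).
  by apply: all; lia.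
by rewrite -iterS -E' (negbTE nA).
Qed.
End P2.

Lemma face_bound (G : drawing) (H : is_drawing G) (c : dart G) :
  count (@inner G) (orbit (@phi G) c) + 5 * isU6 c <= fsize c.
Proof.
rewrite /fsize; case U: (isU6 c); last first.
  by rewrite muln0 addn0 (leq_trans (count_size _ _)) // size_orbit leq_addr.
move: U; rewrite /isU6 /fnv /flen => /and3P [/eqP F4 /eqP F2 Hs].
have O : orbit (@phi G) c = [:: c; phi c; phi (phi c); phi (phi (phi c))].
  by rewrite /orbit F4.
have I4 : phi (phi (phi (phi c))) = c.
  by have := iter_order (phi_inj H) c; rewrite F4.
move: F2 Hs; rewrite F4 O /= !innerE // I4.
case: (isv c); case: (isv (phi c)); case: (isv (phi (phi c)));
  case: (isv (phi (phi (phi c)))) => //.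
Qed.

Lemma step3 (G : drawing) (H : is_drawing G) :
  #|[set e : dart G | inner e && isL e]| + 5 * N_U6 G <= large_sum G.
Proof.
set Q := fun c : dart G => (c \in faces G) && (6 <= fsize c).
rewrite -sum1_card (partition_big (froot (@phi G)) Q); last first.
  move=> e; rewrite ?inE => /andP [_ Le]; rewrite /Q; apply/andP; split.
    by apply/imsetP; exists e.
  have [E1 E2] := fsame H (connect_root (frel (@phi G)) e).
  by move: Le; rewrite /isL /fsize E1 E2.
have -> : N_U6 G = \sum_(c | Q c) (isU6 c : nat).
  rewrite /N_U6 -sum1_card -big_mkcondr /=; apply: eq_bigl => c.
  rewrite inE /Q -andbA; case U: (isU6 c); rewrite ?andbF ?andbT //.
  move: U; rewrite /isU6 /fsize => /and3P [/eqP -> /eqP -> _].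
  by rewrite andbT.
rewrite big_distrr -big_split /=; apply: leq_sum => c /andP [Fc _].
apply: leq_trans (face_bound H c); rewrite leq_add2r.
rewrite sum1_card -size_filter -(card_uniqP (filter_uniq _ (orbit_uniq _ _))).
apply: subset_leq_card; apply/subsetP => e; rewrite mem_filter.
rewrite unfold_in inE => /andP [/andP [In _] /eqP Ec]; rewrite In /= -fconnect_orbit.
by rewrite (fconnect_sym (phi_inj H)) -Ec connect_root.
Qed.

Lemma c2s (T : finType) (A : {set T}) : #|A| = \sum_i (i \in A : nat).
Proof. by rewrite -sum1_card big_mkcond /=; apply: eq_bigr => i _; case: (i \in A). Qed.

Lemma tau_split (G : drawing) :
  tauL (@isB4 G) + tauL (@isB5 G) + tauL (@isA3 G) + tauL (@isA5 G) <=
  #|[set d : dart G | [&& isB4 d || isB5 d || isA3 d || isA5 d, inner d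
                        & trail_ends (@isL G) d]]|.
Proof.
rewrite /tauL !c2s -!big_split /=.
apply: leq_sum => d _; rewrite !inE.
case: (inner d); case: (trail_ends _ d); rewrite ?andbF //=.
rewrite /isB4 /isB5 /isA3 /isA5.
case: (flen d) => [|[|[|[|[|[|n]]]]]]; case: (fnv d) => [|[|m]] //.
Qed.

Section P5.
Variable G : drawing.
Hypothesis H : is_drawing G.
Let D := dart G.
Let P (d : D) (k : 'I_#|D|) :=
  [forall j : 'I_#|D|, (j < k) ==> isA4 (alpha (iter j (@tr G) d))] &&
  isL (alpha (iter k (@tr G) d)).
Let f (d : D) : D := if [pick k | P d k] is Some k then alpha (iter k (@tr G) d) else d.

Lemma f_spec (d : D) : trail_ends (@isL G) d -> exists2 k, P d k & f d = alpha (iter k (@tr G) d).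
Proof.
rewrite /f; case: pickP => [k Pk _| N]; first by exists k.
by move=> /existsP [k Pk]; have := N k; rewrite /P Pk.
Qed.

Lemma step2 :
  #|[set d : D | [&& isB4 d || isB5 d || isA3 d || isA5 d, inner d
                        & trail_ends (@isL G) d]]| <= #|[set e : D | inner e && isL e]|.
Proof.
set S := [set d : D | _].
rewrite -(card_in_imset (f := f)); last first.
  move=> d1 d2; rewrite !inE => /and3P [T1 _ te1] /and3P [T2 _ te2].
  have [k1 P1 ->] := f_spec te1; have [k2 P2 ->] := f_spec te2.
  case: H => alK _ /(congr1 (@alpha G)); rewrite !alK => E.
  have nA (d : D) : isB4 d || isB5 d || isA3 d || isA5 d -> ~~ isA4 d.
    rewrite /isB4 /isB5 /isA3 /isA5 /isA4.
    by case: (flen d) => [|[|[|[|[|[|n]]]]]]; case: (fnv d) => [|[|m]].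
  have allP (d : D) (k : 'I_#|D|) : P d k -> forall j, j < k -> isA4 (alpha (iter j (@tr G) d)).
    move=> /andP [/forallP A _] j jk.
    have jD : j < #|D| by apply: ltn_trans jk (ltn_ord k).
    by have := A (Ordinal jD); rewrite /= jk.
  case: (leqP k1 k2) => le.
    exact: (key H (nA _ T1) (allP _ _ P2) le E).
  apply/esym; exact: (key H (nA _ T2) (allP _ _ P1) (ltnW le) (esym E)).
apply: subset_leq_card; apply/subsetP => x /imsetP [d]; rewrite !inE.
move=> /andP [_ /andP [In te]] ->{x}; have [k /andP [A Lk] ->] := f_spec te.
rewrite Lk andbT inner_al //.
clear Lk; move: A; case: k => [[|k] kD] /= A //.
have kD' : k < #|D| by apply: ltnW.
have := A; move/forallP/(_ (Ordinal kD')); rewrite /= ltnSn /= => A4.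
by case: (tr_A4 H A4).
Qed.
End P5.

Theorem mainTheorem4 (G : drawing) :
  three_saturated G ->
  tauL (@isB4 G) + tauL (@isB5 G) + tauL (@isA3 G) + tauL (@isA5 G)
    + 5 * N_U6 G <= large_sum G.
Proof.
move=> [H _].
apply: leq_trans (step3 H); rewrite leq_add2r.
exact: leq_trans (tau_split G) (step2 H).
Qed.
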